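(* Let $p\in(0,1)$, $d\ge2$ and $N\ge1$ be integers (with $p$ real), $t\in\mathbb{Z}_{\ge0}$, and $y_i=-d(i-1)$, $i=1,\dots,N$. For integers $k\ge0$ and $x\in\mathbb{Z}$ let $$F_{-k}(x,t)=(1-p)^t\frac{(-1)^k}{2\pi i}\oint_{\Gamma_0}\frac{dw}{w}\Big(1+\frac{p}{1-p}w\Big)^t\frac{(1-w)^k}{w^{x+k}},$$ and for $1\le n\le N$, $0\le k\le n-1$, let $\Psi^n_k(x)=(-1)^kF_{-k}(x-y_{n-k},t)$. Put $z=x+d(n-1)$. Then $$\Psi^n_k(x)=\frac{(-1)^k}{2\pi i}\oint_{\Gamma_0}\frac{dw}{w^{z+1}}(1+p(w-1))^t\big((w-1)w^{d-1}\big)^k,$$ and the functions $$\Phi^n_k(x)=\frac{(-1)^k}{2\pi i}\oint_{\Gamma_0}\frac{dv}{v}\,\frac{1+dv}{(1+pv)^t}\,\frac{(1+v)^{z-1}}{(v(1+v)^{d-1})^k},\qquad k=0,\dots,n-1,$$ are polynomials in $x$ of degree at most $n-1$ satisfying $\sum_{x\in\mathbb{Z}}\Phi^n_j(x)\Psi^n_k(x)=\delta_{j,k}$ for $0\le j,k\le n-1$.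
   Context: $\Gamma_0$ denotes any anticlockwise simple loop enclosing only the pole at $0$ of the respective integrand (in particular not enclosing $w=1$, $v=-1$, or $v=-1/p$). *)

(* Defs.v *)
(* Contour integrals (1/2πi)∮_{Γ_0} around the origin, where
   Γ_0 encloses only the pole at 0, are residues at 0; we define them for
   rational integrands P(w) / (Q(w) w^m) with Q(0) <> 0 as the (m-1)-th
   Taylor coefficient at 0 of the analytic function P/Q. *)
From mathcomp Require Import all_boot all_order all_algebra.
From mathcomp Require Import reals.
Set Implicit Arguments. Unset Strict Implicit. Unset Printing Implicit Defensive.
Import Order.TTheory GRing.Theory Num.Theory.
Local Open Scope ring_scope.

Section Residue.
Variable R : fieldType.

(* [sinv Q n] : the truncation to degree n of the power series 1/Q(w),
   (valid when Q`_0 <> 0): each step fixes the coefficient of w^(n+1)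
   so that Q * S = 1 + O(w^(n+2)). *)
Fixpoint sinv (Q : {poly R}) (n : nat) : {poly R} :=
  match n with
  | 0 => (Q`_0)^-1%:P
  | n'.+1 => let S := sinv Q n' in
             S - ((Q * S)`_n'.+1 / Q`_0) *: 'X ^+ n'.+1
  end.

(* res0 P Q m = (1/(2 pi i)) \oint_{Γ_0} P(w) / (Q(w) w^m) dw
   (for Q(0) <> 0), i.e. the residue at 0 = coefficient of w^(m-1) in P/Q. *)
Definition res0 (P Q : {poly R}) (m : int) : R :=
  match m with
  | Posz j.+1 => (P * sinv Q j)`_j
  | _ => 0
  end.

Definition zpos (e : int) : nat := if e is Posz m then m else 0%N.
Definition zneg (e : int) : nat := if e is Negz m then m.+1 else 0%N.

Definition yy (d i : nat) : int := - ((d * (i - 1))%N)%:Z.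

Definition Fm (p : R) (k : nat) (x : int) (t : nat) : R :=
  (1 - p) ^+ t * (-1) ^+ k *
  res0 ((1 + (p / (1 - p)) *: 'X) ^+ t * (1 - 'X) ^+ k) 1 (x + k%:Z + 1).

Definition Psi (p : R) (d t n k : nat) (x : int) : R :=
  (-1) ^+ k * Fm p k (x - yy d (n - k)) t.

Definition zz (d n : nat) (x : int) : int := x + ((d * (n - 1))%N)%:Z.

Definition PsiInt (p : R) (d t n k : nat) (x : int) : R :=
  (-1) ^+ k *
  res0 ((1 + p *: ('X - 1)) ^+ t * (('X - 1) * 'X ^+ (d - 1)) ^+ k) 1
       (zz d n x + 1).

(* Phi^n_k(x) = (-1)^k/(2πi) ∮ dv/v (1+dv)/(1+pv)^t (1+v)^(z-1)/(v(1+v)^(d-1))^k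
   written as (1+dv)(1+v)^{(z-1)_+} / ((1+pv)^t (1+v)^{(z-1)_- + (d-1)k} v^(k+1)) *)
Definition Phi (p : R) (d t n k : nat) (x : int) : R :=
  (-1) ^+ k *
  res0 ((1 + d%:R *: 'X) * (1 + 'X) ^+ zpos (zz d n x - 1))
       ((1 + p *: 'X) ^+ t * (1 + 'X) ^+ (zneg (zz d n x - 1) + (d - 1) * k))
       (k%:Z + 1).

Definition sumZ (f : int -> R) (s : R) : Prop :=
  exists M : nat, (forall x : int, (M < absz x)%N -> f x = 0) /\
    \sum_(i < (2 * M).+1) f (i%:Z - M%:Z) = s.

End Residue.

(* Main.v *)
Require Import Defs.
From mathcomp Require Import all_boot all_order all_algebra.
From mathcomp Require Import reals.
From mathcomp Require Import zify ring lra.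
Import Order.TTheory GRing.Theory Num.Theory.
Local Open Scope ring_scope.
Section A.
Variable R : realType.
Implicit Types (P Q S : {poly R}).

Definition eqm (K : nat) P Q := forall i, (i < K)%N -> P`_i = Q`_i.

Lemma eqm_refl K P : eqm K P P. Proof. by []. Qed.
Lemma eqm_sym K P Q : eqm K P Q -> eqm K Q P. Proof. by move=> h i /h. Qed.
Lemma eqm_trans K P Q S : eqm K P Q -> eqm K Q S -> eqm K P S.
Proof. by move=> h1 h2 i hi; rewrite h1 // h2. Qed.
Lemma eqmD K P Q P' Q' : eqm K P Q -> eqm K P' Q' -> eqm K (P + P') (Q + Q').
Proof. by move=> h1 h2 i hi; rewrite !coefD h1 // h2. Qed.
Lemma eqmZ K c P Q : eqm K P Q -> eqm K (c *: P) (c *: Q).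
Proof. by move=> h i hi; rewrite !coefZ h. Qed.
Lemma eqmM K P Q P' Q' : eqm K P Q -> eqm K P' Q' -> eqm K (P * P') (Q * Q').
Proof.
move=> h1 h2 i hi; rewrite !coefM; apply: eq_bigr => j _.
have hj : (j < K)%N by apply: leq_ltn_trans hi; rewrite -ltnS.
rewrite h1 // h2 //; apply: leq_ltn_trans hi; exact: leq_subr.
Qed.
Lemma eqm_sum K (I : Type) (r : seq I) (F G : I -> {poly R}) :
  (forall i, eqm K (F i) (G i)) -> eqm K (\sum_(i <- r) F i) (\sum_(i <- r) G i).
Proof.
move=> h; elim: r => [|a r IH]; first by rewrite !big_nil.
by rewrite !big_cons; apply: eqmD.
Qed.

Arguments eqm_trans {K P} Q {S}.
Arguments eqmM {K P Q P' Q'}.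
Arguments eqmD {K P Q P' Q'}.
Arguments eqmZ {K} c {P Q}.
Arguments eqm_sym {K P Q}.
Arguments eqm_sum {K I r F G}.

Lemma sinv_spec Q j : Q`_0 != 0 -> eqm j.+1 (Q * sinv Q j) 1.
Proof.
move=> hQ; elim: j => [|j IH].
  move=> i; rewrite ltnS leqn0 => /eqP ->.
  by rewrite coefMC coef1 /= mulfV.
move=> i hi /=.
rewrite mulrBr coefB -scalerAr coefZ coefMXn.
case: (ltnP i j.+1) => hij.
  by rewrite mulr0 subr0 IH.
have -> : i = j.+1 by apply/eqP; rewrite eqn_leq hij -ltnS hi.
by rewrite subnn divfK // subrr coef1.
Qed.

Lemma res0_eq P Q S j : Q`_0 != 0 -> eqm j.+1 (Q * S) 1 ->
  res0 P Q (Posz j.+1) = (P * S)`_j.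
Proof.
move=> hQ hS /=.
have h : eqm j.+1 (sinv Q j) S.
  apply: (eqm_trans (sinv Q j * (Q * S))).
    by rewrite -[X in eqm _ X]mulr1; apply: eqmM => //; apply: eqm_sym.
  rewrite mulrA [sinv Q j * Q]mulrC -[X in eqm _ _ X]mul1r.
  by apply: eqmM => //; apply: sinv_spec.
by rewrite (eqmM (eqm_refl j.+1 P) h).
Qed.

Lemma sinv1 j : sinv (1 : {poly R}) j = 1.
Proof. by elim: j => [|j IH] /=; rewrite ?coef1 ?invr1 // IH mulr1 coef1 /= mul0r scale0r subr0. Qed.

Definition coefz P (m : int) : R := if m is Posz j then P`_j else 0.

Lemma res0_le0 P Q m : m <= 0 -> res0 P Q m = 0.
Proof. by case: m => [[|j]|j]. Qed.

Lemma res0_1 P m : res0 P 1 (m + 1) = coefz P m.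
Proof.
case: m => [j|j].
  by rewrite -PoszD addn1 /= sinv1 mulr1.
by rewrite res0_le0 //= NegzE; lia.
Qed.
Implicit Types (U V : {poly R}).

Definition gbin (m : int) (i : nat) : R :=
  (\prod_(r < i) (m%:~R - r%:R)) / (i`!)%:R.

Lemma fact_neq0 i : (i`!)%:R != 0 :> R.
Proof. by rewrite pnatr_eq0 -lt0n fact_gt0. Qed.

Lemma gbin0 m : gbin m 0 = 1.
Proof. by rewrite /gbin big_ord0 fact0 divr1. Qed.

Lemma gbinS m i : gbin m i.+1 = gbin m i * (m%:~R - i%:R) / i.+1%:R.
Proof.
rewrite /gbin big_ord_recr /= factS natrM.
have h1 := fact_neq0 i.
have h2 : 1 + i%:R != 0 :> R by rewrite addrC natr1 pnatr_eq0.
field. by rewrite h1 h2.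
Qed.

Lemma gbin_pascal m i : gbin (m + 1) i.+1 = gbin m i.+1 + gbin m i.
Proof.
elim: i => [|i IH].
  by rewrite !gbinS !gbin0 intrD; field.
rewrite gbinS IH (gbinS m i.+1) (gbinS m i) intrD.
have h1 : 1 + i%:R != 0 :> R by rewrite addrC natr1 pnatr_eq0.
have h2 : 1 + i.+1%:R != 0 :> R by rewrite addrC natr1 pnatr_eq0.
rewrite -addn1 natrD in h2 *.
field. by rewrite h2 andbT addrC.
Qed.

Lemma gbin0n i : gbin 0 i.+1 = 0.
Proof. by rewrite /gbin big_ord_recl /= subrr mul0r mul0r. Qed.

Definition Epoly (K : nat) (m : int) : {poly R} := \poly_(i < K) gbin m i.

Lemma E_shift K m : eqm K (Epoly K m * (1 + 'X)) (Epoly K (m + 1)).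
Proof.
move=> i hi; rewrite mulrDr mulr1 coefD coefMX !coef_poly hi.
case: i hi => [|i] hi /=; first by rewrite !gbin0 addr0.
by rewrite (ltnW hi) gbin_pascal.
Qed.

Lemma E_pow K a : forall m, eqm K (Epoly K m * (1 + 'X) ^+ a) (Epoly K (m + a%:Z)).
Proof.
elim: a => [|a IH] m; first by rewrite expr0 mulr1 addr0.
rewrite exprS mulrA.
apply: (eqm_trans (Epoly K (m + 1) * (1 + 'X) ^+ a)).
  exact: (eqmM (E_shift K m) (eqm_refl K ((1 + 'X) ^+ a))).
have -> : m + a.+1%:Z = (m + 1) + a%:Z by rewrite -addn1 PoszD; ring.
exact: IH.
Qed.

Lemma E0 K : eqm K (Epoly K 0) 1.
Proof.
move=> i hi; rewrite coef_poly hi coef1.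
by case: i hi => [|i] _; rewrite ?gbin0 ?gbin0n.
Qed.

Lemma E_inv K b : eqm K ((1 + 'X) ^+ b * Epoly K (- b%:Z)) 1.
Proof.
rewrite mulrC; apply: (eqm_trans _ (E_pow K b _)).
by rewrite addNr; apply: E0.
Qed.

Lemma res0_phi U V (a b k : nat) : V`_0 != 0 ->
  res0 (U * (1 + 'X) ^+ a) (V * (1 + 'X) ^+ b) (Posz k.+1) =
  (U * sinv V k * Epoly k.+1 (a%:Z - b%:Z))`_k.
Proof.
move=> hV.
rewrite (@res0_eq _ _ (sinv V k * Epoly k.+1 (- b%:Z))).
- have : eqm k.+1 ((U * (1 + 'X) ^+ a) * (sinv V k * Epoly k.+1 (- b%:Z)))
              (U * sinv V k * Epoly k.+1 (a%:Z - b%:Z)).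
    have -> : (U * (1 + 'X) ^+ a) * (sinv V k * Epoly k.+1 (- b%:Z)) =
              (U * sinv V k) * (Epoly k.+1 (- b%:Z) * (1 + 'X) ^+ a).
      by ring.
    apply: eqmM; first exact: eqm_refl.
    by apply: (eqm_trans _ (E_pow _ _ _)); rewrite addrC.
  by move=> h; apply: h.
- by rewrite -horner_coef0 hornerM horner_exp !hornerE horner_coef0 expr1n mulr1.
- have -> : (V * (1 + 'X) ^+ b) * (sinv V k * Epoly k.+1 (- b%:Z)) =
            (V * sinv V k) * ((1 + 'X) ^+ b * Epoly k.+1 (- b%:Z)).
    by ring.
  rewrite -[X in eqm _ _ X]mulr1; apply: eqmM; first exact: sinv_spec.
  exact: E_inv.
Qed.

Lemma coefz_neg P m : m < 0 -> coefz P m = 0.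
Proof. by case: m. Qed.

Lemma coefzZ c P m : c * coefz P m = coefz (c *: P) m.
Proof. by case: m => [j|j] /=; rewrite ?coefZ ?mulr0. Qed.

Lemma coefzMXn P e m : coefz (P * 'X^e) m = coefz P (m - e%:Z).
Proof.
case: m => [j|j]; last by rewrite /= coefz_neg // NegzE; lia.
rewrite /= coefMXn; case: (ltnP j e) => h.
  by rewrite coefz_neg //; lia.
have -> : (Posz j - Posz e) = Posz (j - e)%N by lia.
by [].
Qed.

Lemma int_eq1 (d n k : nat) (x : int) : (1 <= d)%N -> (k <= n - 1)%N ->
  x - yy d (n - k) + k%:Z = zz d n x - ((d - 1) * k)%N%:Z.
Proof.
move=> hd hk; rewrite /yy /zz.
have [r hr] : exists r, (n - 1 = k + r)%N by exists (n - 1 - k)%N; lia.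
have -> : (n - k - 1 = r)%N by lia.
rewrite hr.
have -> : (d * (k + r) = d * r + k + (d - 1) * k)%N.
  case: d hd => // d _; rewrite subn1 /= mulnDr mulSn; lia.
rewrite !PoszD; lia.
Qed.

Lemma part1 (p : R) (d t n k : nat) (x : int) : p != 1 -> (1 <= d)%N -> (k <= n - 1)%N ->
  Psi p d t n k x = PsiInt p d t n k x.
Proof.
move=> hp hd hk.
rewrite /Psi /PsiInt /Fm res0_1 res0_1.
have hs : (-1) ^+ k * (-1) ^+ k = 1 :> R by rewrite -exprD -signr_odd oddD addbb.
rewrite mulrCA -mulrA (mulrA ((-1) ^+ k)) hs mul1r.
rewrite !coefzZ exprMn -exprM mulrA.
rewrite [in RHS]scalerAl coefzMXn [in RHS]scalerAr -[in RHS]exprZn [in LHS]scalerAl -[in LHS]exprZn.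
have -> : (1 - p) *: (1 + (p / (1 - p)) *: 'X) = 1 + p *: ('X - 1) :> {poly R}.
  have hq : (1 - p) * (p / (1 - p)) = p.
    by field; rewrite subr_eq0 eq_sym.
  rewrite scalerDr scalerA hq scalerBr !alg_polyC polyCB polyC1.
  by ring.
have -> : (-1) *: ('X - 1) = 1 - 'X :> {poly R} by rewrite scaleN1r opprB.
by rewrite int_eq1 // mulnC.
Qed.
Lemma zposneg (e : int) : (zpos e)%:Z - (zneg e)%:Z = e.
Proof. by case: e => [m|m] /=; rewrite ?subr0 // NegzE sub0r. Qed.

Lemma Phi_eq (p : R) (d t n k : nat) (x : int) :
  Phi p d t n k x = (-1) ^+ k *
    ((1 + d%:R *: 'X) * sinv ((1 + p *: 'X) ^+ t) k *
     Epoly k.+1 (zz d n x - 1 - ((d - 1) * k)%N%:Z))`_k.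
Proof.
rewrite /Phi -PoszD addn1 res0_phi.
  by rewrite PoszD opprD addrA zposneg.
by rewrite -horner_coef0 horner_exp !hornerE expr1n oner_neq0.
Qed.

Definition gpoly (l : nat) : {poly R} :=
  ((l`!)%:R)^-1 *: \prod_(r < l) ('X - (r%:R)%:P).

Lemma gpolyE m l : gbin m l = (gpoly l).[m%:~R].
Proof.
rewrite /gbin /gpoly hornerZ horner_prod mulrC; congr (_ * _).
by apply: eq_bigr => r _; rewrite hornerXsubC.
Qed.

Lemma size_gpoly l : (size (gpoly l) <= l.+1)%N.
Proof.
apply: leq_trans (size_scale_leq _ _) _.
elim: l => [|l IH]; first by rewrite big_ord0 size_poly1.
rewrite big_ord_recr /=; apply: leq_trans (size_mul_leq _ _) _.
rewrite size_XsubC addn2 /=; exact: IH.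
Qed.

Lemma size_sum_le (I : Type) (r : seq I) (F : I -> {poly R}) (n : nat) :
  (forall i, (size (F i) <= n)%N) -> (size (\sum_(i <- r) F i)%R <= n)%N.
Proof.
move=> h; elim: r => [|a r IH]; first by rewrite big_nil size_poly0.
rewrite big_cons; apply: leq_trans (size_polyD _ _) _.
by rewrite geq_max h IH.
Qed.

Lemma coef_polyE (W : {poly R}) (k : nat) (c : R) :
  exists P : {poly R}, (size P <= k.+1)%N /\
    forall m : int, (W * Epoly k.+1 m)`_k = P.[m%:~R].
Proof.
exists (\sum_(i < k.+1) W`_i *: gpoly (k - i)).
split.
  apply: size_sum_le => i; apply: leq_trans (size_scale_leq _ _) _.
  apply: leq_trans (size_gpoly _) _; rewrite ltnS; exact: leq_subr.
move=> m; rewrite coefM horner_sum; apply: eq_bigr => i _.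
rewrite hornerZ coef_poly gpolyE; congr (_ * _).
by rewrite ltnS leq_subr.
Qed.

Lemma part2 (p : R) (d t n k : nat) : (k <= n - 1)%N -> (1 <= n)%N ->
  exists P : {poly R}, (size P <= n)%N /\
       forall x : int, Phi p d t n k x = P.[x%:~R].
Proof.
move=> hk hn.
have [P [hP1 hP2]] := coef_polyE ((1 + d%:R *: 'X) * sinv ((1 + p *: 'X) ^+ t) k) k 0.
set c : int := (d * (n - 1))%N%:Z - 1 - ((d - 1) * k)%N%:Z.
exists ((-1) ^+ k *: (P \Po ('X + (c%:~R)%:P))).
split.
  apply: leq_trans (size_scale_leq _ _) _.
  apply: leq_trans (size_comp_poly_leq _ _) _.
  rewrite size_XaddC muln1.
  move: hP1; case: (size P) => [|s] /=; lia.
move=> x; rewrite Phi_eq hP2 hornerZ horner_comp !hornerE.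
congr (_ * P.[_]).
rewrite /zz /c -intrD; congr (_%:~R); lia.
Qed.
Lemma sum_window (G : int -> R) (M off T : nat) :
  (off <= M)%N -> (T <= M.+1 + off)%N ->
  (forall s : int, s < 0 -> G s = 0) ->
  (forall s : nat, (T <= s)%N -> G s%:Z = 0) ->
  \sum_(i < (2 * M).+1) G (i%:Z - M%:Z + off%:Z) = \sum_(s < T) G s%:Z.
Proof.
move=> h1 h2 hneg hbig.
rewrite -(big_mkord xpredT (fun i => G (i%:Z - M%:Z + off%:Z))).
rewrite (big_cat_nat _ (n := (M - off)%N)) //=; last by lia.
rewrite big_nat_cond big1 ?add0r; last first.
  move=> i /= hi; apply: hneg; lia.
rewrite -{1}(add0n (M - off)%N).
rewrite (big_addn 0 (2 * M).+1 (M - off) xpredT (fun i => G (i%:Z - M%:Z + off%:Z))).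
rewrite (big_cat_nat _ (n := T)) //=; last by lia.
rewrite addrC big_nat_cond big1 ?add0r; last first.
  move=> i /= hi.
  have -> : (i + (M - off))%N%:Z - M%:Z + off%:Z = i%:Z by lia.
  by apply: hbig; lia.
rewrite big_mkord; apply: eq_bigr => i _.
by congr G; lia.
Qed.

Lemma comp_polyXn' (P Q : {poly R}) (m : nat) : (P ^+ m) \Po Q = (P \Po Q) ^+ m.
Proof.
elim: m => [|m IH]; first by rewrite !expr0 -polyC1 comp_polyC.
by rewrite !exprS comp_polyM IH.
Qed.

Definition Cpol (p : R) (t k : nat) : {poly R} :=
  (1 + p *: ('X - 1)) ^+ t * (1 - 'X) ^+ k.

Lemma Psi_coef (p : R) (d t n k : nat) (x : int) : p != 1 -> (k <= n - 1)%N ->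
  Psi p d t n k x = coefz (Cpol p t k) (x + (d * (n - k - 1) + k)%N%:Z).
Proof.
move=> hp hk.
rewrite /Psi /Fm res0_1.
have hs : (-1) ^+ k * (-1) ^+ k = 1 :> R by rewrite -exprD -signr_odd oddD addbb.
rewrite mulrCA -mulrA (mulrA ((-1) ^+ k)) hs mul1r.
rewrite !coefzZ scalerAl -exprZn.
have -> : (1 - p) *: (1 + (p / (1 - p)) *: 'X) = 1 + p *: ('X - 1) :> {poly R}.
  have hq : (1 - p) * (p / (1 - p)) = p.
    by field; rewrite subr_eq0 eq_sym.
  rewrite scalerDr scalerA hq scalerBr !alg_polyC polyCB polyC1.
  by ring.
rewrite /Cpol /yy; congr coefz; lia.
Qed.
Lemma negXn (k : nat) : (- 'X : {poly R}) ^+ k = ((-1) ^+ k : R) *: 'X^k.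
Proof.
elim: k => [|k IH]; first by rewrite !expr0 scale1r.
by rewrite !exprS IH -scalerA scaleN1r mulNr scalerAr.
Qed.

Lemma part3_sum (p : R) (d t n j k : nat) : p != 1 -> (1 <= d)%N ->
  (j <= n - 1)%N -> (k <= n - 1)%N ->
  \sum_(s < size (Cpol p t k))
     Phi p d t n j (s%:Z - (d * (n - k - 1) + k)%N%:Z) * (Cpol p t k)`_s
  = (if j == k then 1 else 0).
Proof.
move=> hp hd hj hk.
set C := Cpol p t k.
set off := (d * (n - k - 1) + k)%N.
set U : {poly R} := 1 + d%:R *: 'X.
set V : {poly R} := (1 + p *: 'X) ^+ t.
set W := U * sinv V j.
set e : int := (d * (n - 1))%N%:Z - off%:Z - 1 - ((d - 1) * j)%N%:Z.
have hV : V`_0 != 0 by rewrite -horner_coef0 horner_exp !hornerE expr1n oner_neq0.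
have hz : forall s : nat, zz d n (s%:Z - off%:Z) - 1 - ((d - 1) * j)%N%:Z = s%:Z + e.
  by move=> s; rewrite /zz /e; lia.
have step1 : \sum_(s < size C) Phi p d t n j (s%:Z - off%:Z) * C`_s =
    (-1) ^+ j * (\sum_(s < size C) C`_s *: (W * Epoly j.+1 (s%:Z + e)))`_j.
  rewrite coef_sum mulr_sumr; apply: eq_bigr => s _.
  by rewrite Phi_eq hz coefZ -/U -/V -/W -mulrA [C`_s * _]mulrC.
rewrite step1.
have hcomp : C \Po (1 + 'X) = V * (- 'X) ^+ k.
  rewrite /C /Cpol comp_polyM !comp_polyXn' comp_polyD comp_polyZ comp_polyB comp_polyX.
  rewrite -polyC1 comp_polyC polyC1 /V; congr (_ ^+ _ * _ ^+ _).
    by rewrite (addrC 1 'X) addrK.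
  by rewrite comp_polyB comp_polyX -polyC1 comp_polyC polyC1 opprD addrA subrr sub0r.
have step2 : eqm j.+1 (\sum_(s < size C) C`_s *: (W * Epoly j.+1 (s%:Z + e)))
                      (W * Epoly j.+1 e * (C \Po (1 + 'X))).
  apply: (eqm_trans (\sum_(s < size C) C`_s *: (W * (Epoly j.+1 e * (1 + 'X) ^+ s)))).
    apply: eqm_sum => s; apply: eqmZ; apply: eqmM; first exact: eqm_refl.
    by apply: eqm_sym; rewrite [_ + e]addrC; apply: E_pow.
  rewrite comp_polyE mulr_sumr.
  have -> : \sum_(s < size C) C`_s *: (W * (Epoly j.+1 e * (1 + 'X) ^+ s)) =
            \sum_(i < size C) W * Epoly j.+1 e * (C`_i *: (1 + 'X) ^+ i).
    by apply: eq_bigr => s _; rewrite -scalerAr mulrA.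
  exact: eqm_refl.
have step3 : eqm j.+1 (W * Epoly j.+1 e * (C \Po (1 + 'X)))
                      (U * Epoly j.+1 e * (- 'X) ^+ k).
  rewrite hcomp.
  have -> : W * Epoly j.+1 e * (V * (- 'X) ^+ k) =
            (V * sinv V j) * (U * Epoly j.+1 e * (- 'X) ^+ k) by rewrite /W; ring.
  rewrite -[X in eqm _ _ X]mul1r; apply: eqmM; first exact: sinv_spec.
  exact: eqm_refl.
rewrite (eqm_trans _ step2 step3) //.
have hX := negXn k.
rewrite hX -scalerAr coefZ coefMXn.
case: (ltnP j k) => hjk.
  by rewrite (ltn_eqF hjk) !mulr0.
rewrite mulrDl mul1r coefD -scalerAl coefZ coefXM !coef_poly.
have h1 : (j - k < j.+1)%N by lia.
have h2 : ((j - k).-1 < j.+1)%N by lia.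
rewrite h1 h2.
case: (eqVneq j k) => [ejk|hne].
  rewrite ejk subnn eqxx /= gbin0 mulr0 addr0 mulr1.
  by rewrite -exprD -signr_odd oddD addbb.
have [l' hl] : exists l', (j - k = l'.+1)%N by exists (j - k).-1; lia.
rewrite hl /= gbinS.
have f1 : (d * (n - 1) = d * (n - k - 1) + d * k)%N.
  by rewrite -mulnDr; congr (_ * _)%N; lia.
have f2 : ((d - 1) * j = (d - 1) * k + (d - 1) * l'.+1)%N.
  by rewrite -mulnDr; congr (_ * _)%N; lia.
have f3 : (d * k = (d - 1) * k + k)%N.
  by case: (d) hd => [//|d'] _; rewrite subn1 /= mulSn addnC.
have he : e = - ((d - 1) * l'.+1)%N%:Z - 1.
  rewrite /e /off f1 f3 f2 !PoszD; lia.
have ce : (((d - 1) * l'.+1)%N%:Z)%:~R = (d - 1)%:R * (l'%:R + 1) :> R.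
  by rewrite natr1 -natrM.
have cd : d%:R = (d - 1)%:R + 1 :> R.
  by case: (d) hd => [//|d'] _; rewrite subn1 /= natr1.
rewrite he intrB intrN ce cd.
have hb : l'.+1%:R != 0 :> R by rewrite pnatr_eq0.
rewrite -natr1 in hb *.
set g := gbin _ l'.
set a : R := (d - 1)%:R.
set b : R := l'%:R.
have -> : g * (- (a * (b + 1)) - 1%:~R - b) / (b + 1) + (a + 1) * g = 0.
  field. by [].
by rewrite !mulr0.
Qed.
Lemma part3 (p : R) (d t n j k : nat) : p != 1 -> (1 <= d)%N ->
  (j <= n - 1)%N -> (k <= n - 1)%N ->
  sumZ (fun x : int => Phi p d t n j x * Psi p d t n k x)
       (if j == k then 1 else 0).
Proof.
move=> hp hd hj hk.
set C := Cpol p t k.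
set off := (d * (n - k - 1) + k)%N.
set G := fun s : int => Phi p d t n j (s - off%:Z) * coefz C s.
exists (size C + off)%N; split.
  move=> x hx; rewrite Psi_coef // -/off -/C.
  case E: (x + off%:Z) => [s|s] /=; last by rewrite mulr0.
  rewrite nth_default ?mulr0 //; move: (size C) (off) hx E => a b; lia.
rewrite (eq_bigr (fun i : 'I_ _ => G (i%:Z - (size C + off)%N%:Z + off%:Z))); last first.
  by move=> i _; rewrite /G addrK Psi_coef.
rewrite (@sum_window G (size C + off)%N off (size C)) //; first last.
- by move=> s hs; rewrite /G /= nth_default // mulr0.
- by move=> s hs; rewrite /G coefz_neg // mulr0.
- lia.
- lia.
exact: part3_sum.
Qed.
End A.

Theorem lemma4p1 (R : realType) (p : R) (d N t : nat) :
  0 < p < 1 -> (2 <= d)%N -> (1 <= N)%N ->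
  forall n : nat, (1 <= n <= N)%N ->
  (forall (k : nat) (x : int), (k <= n - 1)%N ->
     Psi p d t n k x = PsiInt p d t n k x) /\
  (forall k : nat, (k <= n - 1)%N ->
     exists P : {poly R}, (size P <= n)%N /\
       forall x : int, Phi p d t n k x = P.[x%:~R]) /\
  (forall j k : nat, (j <= n - 1)%N -> (k <= n - 1)%N ->
     sumZ (fun x : int => Phi p d t n j x * Psi p d t n k x)
          (if j == k then 1 else 0)).
Proof.
move=> /andP [hp0 hp1] hd hN n /andP [hn1 hnN].
have hp : p != 1 by rewrite lt_eqF.
have hd1 : (1 <= d)%N by apply: ltnW.
split; [|split].
- by move=> k x hk; apply: part1.
- by move=> k hk; apply: part2.
- by move=> j k hj hk; apply: part3.
Qed.
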